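(* Let $n\ge1$, let $p(x_1,\dots,x_n)=\prod_{i<j}(x_i+x_j)$, and let $\Gamma$ be the $n\times n$ matrix with entries $\Gamma_{ij}=B(\phi_i,\phi_j)$, $0\le i,j\le n-1$. Then $\det\Gamma=c\,p^2x_1\cdots x_n$ for some non-zero constant $c\in\mathbb C$.
   Context: $U(\mathfrak h_n)$ is the associative superalgebra generated by odd elements $\xi_1,\dots,\xi_n$ subject to $\xi_i\xi_j+\xi_j\xi_i=0$ for $i\neq j$; $x_i=\xi_i^2$ are central. Let $W_1$ be the free $\mathbb C[x_1,\dots,x_n]$-submodule of $U(\mathfrak h_n)$ with basis $\xi_1,\dots,\xi_n$, with the $\mathbb C[x_1,\dots,x_n]$-valued symmetric bilinear form $B(a,b)=[a,b]=ab+ba$. Let $T$ be the $\mathbb C[x_1,\dots,x_n]$-linear endomorphism of $W_1$ with $T(\xi_j)=\sum_i t_{ij}\xi_i$, where $t_{ii}=0$, $t_{ij}=x_j$ for $i<j$, $t_{ij}=-x_j$ for $i>j$. Set $\phi_0=\sum_{i}\xi_i$ and $\phi_k=T^k(\phi_0)$. *)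

(* Defs.v *)
From HB Require Import structures.
From mathcomp Require Import all_boot all_order all_algebra.
From mathcomp Require Import mpoly.
Set Implicit Arguments. Unset Strict Implicit. Unset Printing Implicit Defensive.
Import Order.TTheory GRing.Theory Num.Theory.
Local Open Scope ring_scope.

(* Coefficients: C[x_1,...,x_n] is {mpoly C[n]}; x_{i+1} is 'X_i (i : 'I_n).
   Elements of W_1 are represented by their coordinate column vectors
   in the basis xi_1,...,xi_n. *)

(* Gram matrix of B on the basis: B(xi_i, xi_j) = xi_i xi_j + xi_j xi_i,
   which equals 2 x_i if i = j (xi_i^2 = x_i) and 0 if i <> j (anticommutation). *)
Definition gramB (C : fieldType) (n : nat) : 'M[{mpoly C[n]}]_n :=
  \matrix_(i < n, j < n) (if i == j then 2%:R * 'X_i else 0).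

Definition Bform (C : fieldType) (n : nat) (a b : 'cV[{mpoly C[n]}]_n)
  : {mpoly C[n]} :=
  \sum_(i < n) \sum_(j < n) a i 0 * b j 0 * gramB C n i j.

(* Matrix of T in the basis xi: column j holds the coordinates of T(xi_j). *)
Definition Tmat (C : fieldType) (n : nat) : 'M[{mpoly C[n]}]_n :=
  \matrix_(i < n, j < n)
    (if (i < j)%N then 'X_j else if (j < i)%N then - 'X_j else 0).

Definition phi (C : fieldType) (n k : nat) : 'cV[{mpoly C[n]}]_n :=
  iter k (mulmx (Tmat C n)) (const_mx 1).

Definition Gamma (C : fieldType) (n : nat) : 'M[{mpoly C[n]}]_n :=
  \matrix_(i < n, j < n) Bform (phi C n i) (phi C n j).

Definition ppoly (C : fieldType) (n : nat) : {mpoly C[n]} :=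
  \prod_(i < n) \prod_(j < n | (i < j)%N) ('X_i + 'X_j).

(* Main.v *)
Require Import Defs.
From HB Require Import structures.
From mathcomp Require Import all_boot all_order all_algebra.
From mathcomp Require Import mpoly.
From mathcomp Require Import fingroup perm.
From mathcomp Require Import ring zify.
Import Order.TTheory GRing.Theory Num.Theory.
Local Open Scope ring_scope.
Set Implicit Arguments. Unset Strict Implicit. Unset Printing Implicit Defensive.

Definition Tg (R : comNzRingType) (n : nat) (x : 'I_n -> R) : 'M[R]_n :=
  \matrix_(i < n, j < n) (if (i < j)%N then x j else if (j < i)%N then - x j else 0).
Definition aa (R : comNzRingType) (n : nat) (x : 'I_n -> R) (k i : 'I_n) : R :=
  if (i < k)%N then x i else - x i.
Definition vv (R : comNzRingType) (n : nat) (x : 'I_n -> R) (k : 'I_n) : {poly R} :=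
  \prod_(i < n | i != k) ('X - (aa x k i)%:P).
Definition bb (R : comNzRingType) (n : nat) (x : 'I_n -> R) (k i : 'I_n) : R :=
  if (i <= k)%N then x i else - x i.
Definition chi (R : comNzRingType) (n : nat) (x : 'I_n -> R) (k : 'I_n) : {poly R} :=
  'X * vv x k - \sum_b ((Tg x) k b)%:P * vv x b.

Lemma vv_step1 (R : comNzRingType) (n : nat) (x : 'I_n -> R) (k : 'I_n) :
  ('X - (x k)%:P) * vv x k = \prod_i ('X - (bb x k i)%:P).
Proof.
rewrite [RHS](bigD1 k) //= /bb leqnn; congr (_ * _); apply: eq_bigr => i ik.
have ik' : (i : nat) != k by [].
by rewrite /aa ltn_neqAle ik'.
Qed.

Lemma vv_step2 (R : comNzRingType) (n : nat) (x : 'I_n -> R) (k k' : 'I_n) :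
  k' = k.+1 :> nat ->
  ('X + (x k')%:P) * vv x k' = \prod_i ('X - (bb x k i)%:P).
Proof.
move=> h; rewrite [RHS](bigD1 k') //= /bb h ltnn polyCN opprK; congr (_ * _).
by apply: eq_bigr => i ik; rewrite /aa h ltnS.
Qed.

Lemma Tg_step (R : comNzRingType) (n : nat) (x : 'I_n -> R) (k k' b : 'I_n) :
  k' = k.+1 :> nat ->
  Tg x k b = Tg x k' b + (if b == k then x b else 0) + (if b == k' then x b else 0).
Proof.
move=> h.
have E1 : (b == k') = ((b:nat) == k.+1) by rewrite -h.
have E2 : (b == k) = ((b:nat) == k) by [].
rewrite !mxE E1 E2 h.
case: (ltngtP b k) => [bk|kb|bk].
- have bk1 : (b < k.+1)%N by apply: ltn_trans bk _.
  by rewrite ltnNge (ltnW bk1) bk1 (ltn_eqF bk1) !addr0.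
- case: (ltngtP b k.+1) => [bk1|k1b|bk1].
  + by rewrite ltnS leqNgt kb in bk1.
  + by rewrite !addr0.
  + by rewrite !add0r.
- by rewrite bk (ltnNge k.+1 k) leqnSn ltnSn (ltn_eqF (ltnSn k)) addr0 addNr.
Qed.

Lemma chi_step (R : comNzRingType) (n : nat) (x : 'I_n -> R) (k k' : 'I_n) :
  k' = k.+1 :> nat -> chi x k = chi x k'.
Proof.
move=> h; rewrite /chi.
have -> : \sum_b ((Tg x) k b)%:P * vv x b =
   \sum_b ((Tg x) k' b)%:P * vv x b + (x k)%:P * vv x k + (x k')%:P * vv x k'.
  rewrite (eq_bigr (fun b => ((Tg x) k' b)%:P * vv x b +
     (if b == k then (x b)%:P * vv x b else 0) + (if b == k' then (x b)%:P * vv x b else 0))).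
    by rewrite !big_split -!big_mkcond !big_pred1_eq.
  move=> b _; rewrite (Tg_step x b h) !polyCD !mulrDl.
  by case: (b == k); case: (b == k'); rewrite ?mul0r ?polyC0 ?mul0r ?addr0.
have E1 := vv_step1 x k; have E2 := vv_step2 x h.
apply/eqP; rewrite -subr_eq0; apply/eqP.
transitivity (('X - (x k)%:P) * vv x k - ('X + (x k')%:P) * vv x k'); first ring.
by rewrite E1 E2 subrr.
Qed.

Lemma chi_const (R : comNzRingType) (n : nat) (x : 'I_n -> R) (k k0 : 'I_n) :
  (k0 : nat) = 0%N -> chi x k = chi x k0.
Proof.
move=> h0; case: k => m Hm; elim: m Hm => [|m IH] Hm.
  by congr chi; apply: val_inj.
by rewrite -(IH (ltnW Hm)); symmetry; apply: chi_step.
Qed.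

Lemma size_vv (R : comNzRingType) (n : nat) (x : 'I_n -> R) (k : 'I_n) :
  size (vv x k) = n.
Proof.
rewrite /vv -big_filter size_prod_XsubC size_filter.
have := cardC1 k; rewrite card_ord cardE /enum_mem size_filter => ->.
by case: n k x => [[]|].
Qed.

Lemma lead_vv (R : comNzRingType) (n : nat) (x : 'I_n -> R) (k : 'I_n) :
  (vv x k)`_n.-1 = 1.
Proof.
have := lead_coef_prod_XsubC (index_enum 'I_n) (fun i => i != k) (aa x k).
by rewrite /lead_coef -/(vv x k) size_vv.
Qed.

Lemma coef_id (R : comNzRingType) (n : nat) (x : 'I_n -> R) (k : 'I_n) (j : nat) :
  \sum_b Tg x k b * (vv x b)`_j =
  (if j == 0%N then 0 else (vv x k)`_j.-1) - (chi x k)`_j.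
Proof.
have E : \sum_b ((Tg x) k b)%:P * vv x b = 'X * vv x k - chi x k.
  by rewrite /chi opprB addrC subrK.
have := congr1 (fun p : {poly R} => p`_j) E.
by rewrite coefB coefXM coef_sum => <-; apply: eq_bigr => b _; rewrite coefCM.
Qed.

Definition phig (R : comNzRingType) (n : nat) (x : 'I_n -> R) (k : nat) : 'cV[R]_n :=
  iter k (mulmx (Tg x)) (const_mx 1).
Definition Wc (R : comNzRingType) (n : nat) (x : 'I_n -> R) (j : nat) : 'cV[R]_n :=
  \col_k (vv x k)`_j.

Lemma T_W (R : comNzRingType) (n : nat) (x : 'I_n -> R) (k0 : 'I_n) (j : nat) :
  (k0 : nat) = 0%N ->
  Wc x j = Tg x *m Wc x j.+1 + (chi x k0)`_j.+1 *: const_mx 1.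
Proof.
move=> h0; apply/matrixP => k i; rewrite ord1.
have E : (Tg x *m Wc x j.+1) k 0 = \sum_b Tg x k b * (vv x b)`_j.+1.
  by rewrite mxE; apply: eq_bigr => b _; rewrite [Wc _ _ _ _]mxE.
rewrite [LHS]mxE mxE E mxE [const_mx 1 k 0]mxE.
by rewrite coef_id (chi_const x k h0) mulr1 subrK.
Qed.

Lemma T_Wn (R : comNzRingType) (n : nat) (x : 'I_n -> R) (k0 : 'I_n) :
  (k0 : nat) = 0%N -> Wc x n.-1 = (chi x k0)`_n *: const_mx 1.
Proof.
move=> h0; apply/matrixP => k i; rewrite ord1 !mxE mulr1.
have := coef_id x k n; rewrite (chi_const x k h0).
rewrite big1; last by move=> b _; rewrite nth_default ?size_vv // mulr0.
have -> : (n == 0%N) = false.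
  by apply/negbTE; rewrite -lt0n; apply: leq_ltn_trans (ltn_ord k).
by move/eqP; rewrite eq_sym subr_eq0 => /eqP.
Qed.

Lemma W_rec (R : comNzRingType) (n : nat) (x : 'I_n -> R) (k0 : 'I_n) :
  (k0 : nat) = 0%N -> forall d, (d < n)%N ->
  Wc x (n.-1 - d) = \sum_(i < d.+1) (chi x k0)`_(n - d + i) *: phig x i.
Proof.
move=> h0; elim=> [|d IH] hd.
  by rewrite subn0 big_ord1 subn0 addn0 (T_Wn x h0).
rewrite (T_W x (n.-1 - d.+1) h0).
have -> : ((n.-1 - d.+1).+1 = n.-1 - d)%N by lia.
rewrite IH; last by lia.
rewrite mulmx_sumr [RHS]big_ord_recl addrC; congr (_ + _).
  by congr (_ *: _); congr (_`_ _) => /=; lia.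
apply: eq_bigr => i _; rewrite scalemxAr; congr (_ *m (_ *: _)); congr (_`_ _); rewrite lift0; lia.
Qed.

Definition Vm (R : comNzRingType) (n : nat) (x : 'I_n -> R) : 'M[R]_n :=
  \matrix_(k < n, j < n) (vv x k)`_j.
Definition Km (R : comNzRingType) (n : nat) (x : 'I_n -> R) : 'M[R]_n :=
  \matrix_(a < n, j < n) phig x j a 0.
Definition Hm (R : comNzRingType) (n : nat) (x : 'I_n -> R) (k0 : 'I_n) : 'M[R]_n :=
  \matrix_(i < n, j < n) (if (i + j < n)%N then (chi x k0)`_(i + j + 1) else 0).

Lemma V_KH (R : comNzRingType) (n : nat) (x : 'I_n -> R) (k0 : 'I_n) :
  (k0 : nat) = 0%N -> Vm x = Km x *m Hm x k0.
Proof.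
move=> h0; apply/matrixP => k j.
have hd : (n.-1 - j < n)%N by have := ltn_ord j; lia.
have := congr1 (fun M : 'cV[R]_n => M k 0) (W_rec x h0 hd).
have -> : (n.-1 - (n.-1 - j))%N = j by have := ltn_ord j; lia.
rewrite !mxE => ->; rewrite summxE.
under eq_bigr do rewrite mxE.
rewrite (big_ord_widen n (fun i => (chi x k0)`_(n - (n.-1 - j) + i) * phig x i k 0)); last by lia.
rewrite big_mkcond; apply: eq_bigr => i _; rewrite !mxE.
have -> : (i < (n.-1 - j).+1)%N = (i + j < n)%N by have := ltn_ord j; lia.
case: ifP => _; last by rewrite mulr0.
rewrite mulrC; congr (_ * _); congr (_`_ _).
have := ltn_ord j; lia.
Qed.

Lemma chi_n (R : comNzRingType) (n : nat) (x : 'I_n -> R) (k0 : 'I_n) :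
  (k0 : nat) = 0%N -> (chi x k0)`_n = 1.
Proof.
move=> h0; have := congr1 (fun M : 'cV[R]_n => M k0 0) (T_Wn x h0).
by rewrite !mxE lead_vv mulr1 => <-.
Qed.

Lemma detH2 (R : comNzRingType) (n : nat) (x : 'I_n -> R) (k0 : 'I_n) :
  (k0 : nat) = 0%N -> \det (Hm x k0) ^+ 2 = 1.
Proof.
move=> h0; set s := perm (@rev_ord_inj n).
have tL : is_trig_mx (row_perm s (Hm x k0)).
  apply/is_trig_mxP => i j ij; rewrite !mxE permE /=.
  by have := ltn_ord i; case: ifP => //; lia.
have := det_trig tL.
rewrite (eq_bigr (fun _ => 1)); last first.
  move=> i _; rewrite !mxE permE /=.
  have -> : (n - i.+1 + i < n)%N by have := ltn_ord i; lia.
  have -> : (n - i.+1 + i + 1 = n)%N by have := ltn_ord i; lia.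
  exact: chi_n.
rewrite big1_eq row_permE det_mulmx det_perm => E.
by rewrite -[LHS]mul1r -{1}(sqrr_sign _ (odd_perm s)) -exprMn E expr1n.
Qed.

Definition pg (R : comNzRingType) (n : nat) (x : 'I_n -> R) : R :=
  \prod_(i < n) \prod_(j < n | (i < j)%N) (x i + x j).

Lemma exch_prod (R : comNzRingType) (n : nat) (F : 'I_n -> 'I_n -> R) :
  \prod_(k < n) \prod_(i < n | (i < k)%N) F i k =
  \prod_(i < n) \prod_(k < n | (i < k)%N) F i k.
Proof.
under eq_bigr do rewrite big_mkcond.
rewrite exchange_big; apply: eq_bigr => i _.
by rewrite [RHS]big_mkcond.
Qed.

Lemma prod_id (R : comNzRingType) (n : nat) (x : 'I_n -> R) :
  \prod_(k < n) \prod_(i < n | i != k) (- x k - aa x k i) =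
  pg x * \prod_(i < n) \prod_(j < n | (i < j)%N) ((- x j) - (- x i)).
Proof.
rewrite (eq_bigr (fun k : 'I_n => \prod_(i < n | (i < k)%N) (-(x i + x k)) *
                            \prod_(i < n | (k < i)%N) (x i - x k))); last first.
  move=> k _; rewrite big_mkcond [X in X * _]big_mkcond [X in _ * X]big_mkcond.
  rewrite -big_split; apply: eq_bigr => i _ /=.
  have E : (i != k) = ((i : nat) != k) by [].
  rewrite E /aa; case: (ltngtP i k) => _; rewrite ?mulr1 ?mul1r //.
  - by rewrite opprD addrC.
  - by rewrite opprK addrC.
rewrite big_split exch_prod /pg -!big_split; apply: eq_bigr => i _.
rewrite -!big_split; apply: eq_bigr => j _ /=; ring.
Qed.

Lemma detV (R : idomainType) (n : nat) (x : 'I_n -> R) :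
  (forall i j : 'I_n, i != j -> x i != x j) -> \det (Vm x) = pg x.
Proof.
move=> hx; set a : 'rV[R]_n := \row_m (- x m).
set Em : 'M[R]_n := \matrix_(k < n, m < n) (vv x k).[- x m].
have VE : Vm x *m Vandermonde n a = Em.
  apply/matrixP => k m; rewrite !mxE (horner_coef_wide _ (eq_leq (size_vv x k))).
  by apply: eq_bigr => j _; rewrite !mxE.
have tE : is_trig_mx Em.
  apply/is_trig_mxP => k m km; rewrite mxE horner_prod (bigD1 m) /=; last first.
    by rewrite -(inj_eq val_inj) /= gtn_eqF.
  by rewrite hornerXsubC /aa ltnNge (ltnW km) /= subrr mul0r.
have dE : \det Em = pg x * \det (Vandermonde n a).
  rewrite det_trig // det_Vandermonde.
  have -> : \prod_(i < n) \prod_(j < n | (i < j)%N) (a 0 j - a 0 i) =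
     \prod_(i < n) \prod_(j < n | (i < j)%N) (- x j - - x i).
    by apply: eq_bigr => i _; apply: eq_bigr => j _; rewrite !mxE.
  rewrite -prod_id; apply: eq_bigr => k _.
  rewrite mxE horner_prod; apply: eq_bigr => i _; rewrite hornerXsubC.
  by [].
have nz : \det (Vandermonde n a) != 0.
  rewrite det_Vandermonde; apply/prodf_neq0 => i _; apply/prodf_neq0 => j ij.
  rewrite !mxE subr_eq0 (inj_eq oppr_inj) hx //.
  by rewrite -(inj_eq val_inj) /= gtn_eqF.
by apply: (mulIf nz); rewrite -det_mulmx VE.
Qed.

Definition Gg (R : comNzRingType) (n : nat) (x : 'I_n -> R) : 'M[R]_n :=
  \matrix_(i < n, j < n) (if i == j then 2%:R * x i else 0).
Definition Bg (R : comNzRingType) (n : nat) (x : 'I_n -> R) (a b : 'cV[R]_n) : R :=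
  \sum_(i < n) \sum_(j < n) a i 0 * b j 0 * Gg x i j.
Definition Gammag (R : comNzRingType) (n : nat) (x : 'I_n -> R) : 'M[R]_n :=
  \matrix_(i < n, j < n) Bg x (phig x i) (phig x j).

Theorem main_generic (R : idomainType) (n : nat) (x : 'I_n -> R) :
  (0 < n)%N -> (forall i j : 'I_n, i != j -> x i != x j) ->
  \det (Gammag x) = 2%:R ^+ n * \prod_(i < n) x i * pg x ^+ 2.
Proof.
move=> n0 hx; set k0 : 'I_n := Ordinal n0.
have h0 : (k0 : nat) = 0%N by [].
have EG : Gammag x = (Km x)^T *m Gg x *m Km x.
  apply/matrixP => i j; rewrite !mxE /Bg.
  under [RHS]eq_bigr do rewrite mxE big_distrl.
  rewrite exchange_big; apply: eq_bigr => a _; apply: eq_bigr => b _.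
  by rewrite !mxE mulrAC.
have dG : \det (Gg x) = 2%:R ^+ n * \prod_(i < n) x i.
  have tG : is_trig_mx (Gg x).
    apply/is_trig_mxP => i j ij; rewrite mxE.
    by rewrite -(inj_eq val_inj) /= ltn_eqF.
  rewrite det_trig // (eq_bigr (fun i => 2%:R * x i)); last by move=> i _; rewrite mxE eqxx.
  by rewrite big_split /= prodr_const card_ord.
have dK : \det (Km x) ^+ 2 = pg x ^+ 2.
  rewrite -(detV hx) (V_KH x h0) det_mulmx exprMn (detH2 x h0) mulr1.
  by [].
rewrite EG !det_mulmx det_tr dG -dK.
by rewrite expr2; ring.
Qed.

Theorem lemma3p2 (C : numClosedFieldType) (n : nat) : (1 <= n)%N ->
  exists c : C, c != 0 /\
    \det (Gamma C n) = c *: (ppoly C n ^+ 2 * \prod_(i < n) 'X_i).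
Proof.
move=> n1; exists (2 ^+ n); split.
  by rewrite expf_neq0 // pnatr_eq0.
have hx : forall i j : 'I_n, i != j -> ('X_i : {mpoly C[n]}) != 'X_j.
  move=> i j ij; apply/eqP => E.
  have := congr1 (meval (fun l : 'I_n => (l == i)%:R : C)) E.
  rewrite !mevalXU eqxx eq_sym (negbTE ij) => /eqP; by rewrite oner_eq0.
have := main_generic n1 hx.
Timeout 60 have G1 : Gamma C n = Gammag (fun i : 'I_n => ('X_i : {mpoly C[n]})) := erefl.
Timeout 60 have P1 : ppoly C n = pg (fun i : 'I_n => ('X_i : {mpoly C[n]})) := erefl.
rewrite G1 P1 => ->.
move: (pg _) (\prod_(i < n) _) => P Q.
rewrite -mul_mpolyC -[(2 ^+ n : C)]natrX mpolyC_nat natrX.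
ring.
Qed.
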